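(* Let $m\ge1$, let $\mathcal{I}\subseteq\mathcal{M}_m$ be a decreasing monomial set with $r=\max_{f\in\mathcal{I}}\deg f$, and let $f,g,f^*,g^*\in\mathcal{I}_r$ with $\{f,g\}\neq\{f^*,g^*\}$ such that $h=\gcd(f,g)$ and $h^*=\gcd(f^*,g^* )$ satisfy $\deg(h)=\deg(h^* )=r-2$. Then the sets \[ {\rm LTA}(m,2)_h\cdot h\cdot\Big({\rm LTA}(m,2)_{f} \cdot \tfrac{f}{h}+{\rm LTA}(m,2)_{g}\cdot \tfrac{g}{h}\Big)\quad\text{and}\quad {\rm LTA}(m,2)_{h^*}\cdot h^*\cdot\Big({\rm LTA}(m,2)_{f^*} \cdot \tfrac{f^*}{h^*}+{\rm LTA}(m,2)_{g^*}\cdot \tfrac{g^*}{h^*}\Big) \] are disjoint.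
   Context: $\mathbf{R}_m=\mathbb{F}_2[x_0,\dots,x_{m-1}]/(x_0^2-x_0,\dots,x_{m-1}^2-x_{m-1})$. $\mathcal{M}_m$ is the set of monomials $x_0^{i_0}\cdots x_{m-1}^{i_{m-1}}$, $i_j\in\{0,1\}$. For a monomial $f$, $\operatorname{ind}(f)$ is the set of indices of variables dividing $f$, $\deg f=|\operatorname{ind}(f)|$; $\gcd(f,g)$ has $\operatorname{ind}=\operatorname{ind}(f)\cap\operatorname{ind}(g)$; for $h\mid f$, $f/h$ has $\operatorname{ind}=\operatorname{ind}(f)\setminus\operatorname{ind}(h)$. Order: $f\preceq_w g$ iff $\operatorname{ind}(f)\subseteq\operatorname{ind}(g)$; for equal-degree $f=x_{i_1}\cdots x_{i_s}$, $g=x_{j_1}\cdots x_{j_s}$ (increasing indices), $f\preceq_{sh}g$ iff $i_\ell\le j_\ell$ for all $\ell$; $f\preceq g$ iff $f\preceq_{sh}g^*\preceq_w g$ for some $g^*$. $\mathcal{I}$ is decreasing if $f\in\mathcal{I}$, $g\preceq f$ imply $g\in\mathcal{I}$; $\mathcal{I}_r=\{f\in\mathcal{I}:\deg f=r\}$. ${\rm LTA}(m,2)$ is the set of pairs $(\mathbf{B},\varepsilon)$ with $\mathbf{B}=(b_{i,j})\in\mathbb{F}_2^{m\times m}$ lower triangular with ones on the diagonal and $\varepsilon\in\mathbb{F}_2^m$; for a monomial $u$, $(\mathbf{B},\varepsilon)\cdot u\in\mathbf{R}_m$ replaces each variable $x_i$ of $u$ by $x_i+\sum_{j<i}b_{i,j}x_j+\varepsilon_i$.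 For a monomial $g$, ${\rm LTA}(m,2)_g$ is the set of $(\mathbf{B},\varepsilon)\in{\rm LTA}(m,2)$ with $\varepsilon_i=0$ for $i\notin\operatorname{ind}(g)$ and $b_{i,j}=0$ (for $j<i$) whenever $i\notin\operatorname{ind}(g)$ or $j\in\operatorname{ind}(g)$. For $G\subseteq{\rm LTA}(m,2)$ and monomial $u$, $G\cdot u=\{(\mathbf{B},\varepsilon)\cdot u:(\mathbf{B},\varepsilon)\in G\}$. For sets $\mathcal{S},\mathcal{T}\subseteq\mathbf{R}_m$: $\mathcal{S}+\mathcal{T}=\{s+t\}$, $\mathcal{S}\cdot\mathcal{T}=\{st\}$; $G\cdot h\cdot(\mathcal{S})$ is the product of the set $G\cdot h$ with the set $\mathcal{S}$. *)

(* Defs.v *)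
(* Elements of R_m = F_2[x_0..x_{m-1}]/(x_i^2-x_i) are
   represented by their unique multilinear representative: the set of
   monomials with coefficient 1.  A monomial is identified with ind(f),
   a subset of 'I_m. *)
From mathcomp Require Import all_boot all_order all_algebra.
Set Implicit Arguments. Unset Strict Implicit. Unset Printing Implicit Defensive.

Section Defs.
Variable m : nat.

Definition monom := {set 'I_m}.
Definition Rm := {set monom}.

Definition pzero : Rm := set0.
Definition pone : Rm := [set set0].
Definition pvar (i : 'I_m) : Rm := [set [set i]].
(* addition in characteristic 2: symmetric difference of supports *)
Definition padd (p q : Rm) : Rm := (p :\: q) :|: (q :\: p).
(* multiplication: x_S * x_T = x_(S u T) (since x_i^2 = x_i), coefficients mod 2 *)
Definition pmul (p q : Rm) : Rm :=
  [set u : monom | odd #|[set ab in setX p q | ab.1 :|: ab.2 == u]|].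

Definition deg (f : monom) := #|f|.
Definition inds (f : monom) : seq nat := sort leq (map val (enum f)).
Definition le_w (f g : monom) := f \subset g.
Definition le_sh (f g : monom) :=
  (#|f| == #|g|) && all2 leq (inds f) (inds g).
Definition le_mon (f g : monom) := exists gs : monom, le_sh f gs /\ le_w gs g.
Definition decreasing (I : {set monom}) :=
  forall f g : monom, f \in I -> le_mon g f -> g \in I.

Definition LTA (B : 'M[bool]_m) (eps : {ffun 'I_m -> bool}) :=
  (forall i : 'I_m, B i i = true) /\
  (forall i j : 'I_m, (i < j)%N -> B i j = false).

Definition linform (B : 'M[bool]_m) (eps : {ffun 'I_m -> bool}) (i : 'I_m) : Rm :=
  padd (pvar i)
    (padd (\big[padd/pzero]_(j : 'I_m | (j < i)%N) (if B i j then pvar j else pzero))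
          (if eps i then pone else pzero)).

Definition act (B : 'M[bool]_m) (eps : {ffun 'I_m -> bool}) (u : monom) : Rm :=
  \big[pmul/pone]_(i in u) linform B eps i.

Definition LTA_g (g : monom) (B : 'M[bool]_m) (eps : {ffun 'I_m -> bool}) :=
  LTA B eps /\
  (forall i : 'I_m, i \notin g -> eps i = false) /\
  (forall i j : 'I_m, (j < i)%N -> (i \notin g) || (j \in g) -> B i j = false).

(* the set LTA_h . h . (LTA_f . (f/h) + LTA_g . (g/h)), h = gcd(f,g) *)
Definition orbit_set (f g : monom) (p : Rm) :=
  let h := f :&: g in
  exists B1 e1 B2 e2 B3 e3,
    [/\ LTA_g h B1 e1, LTA_g f B2 e2, LTA_g g B3 e3 &
     p = pmul (act B1 e1 h) (padd (act B2 e2 (f :\: h)) (act B3 e3 (g :\: h)))].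

End Defs.

(* Main.v *)
Require Import Defs.
From mathcomp Require Import all_boot all_order all_algebra.
Set Implicit Arguments. Unset Strict Implicit. Unset Printing Implicit Defensive.

Section Abs.
Variable m : nat.
Implicit Types x y v u : 'I_m -> bool.
Definition xo x v : 'I_m -> bool := fun k => x k (+) v k.
Definition z0 : 'I_m -> bool := fun _ => false.
Definition flip x (j : 'I_m) : 'I_m -> bool := fun k => if k == j then ~~ x k else x k.
Definition msupp v (i : 'I_m) := v i = true /\ forall k : 'I_m, (k < i)%N -> v k = false.

Definition Inv1 (P : ('I_m -> bool) -> bool) (i : 'I_m) :=
  exists v, msupp v i /\ forall x, P (xo x v) = P x.
Definition Inv2 (P : ('I_m -> bool) -> bool) (i : 'I_m) :=
  forall v, msupp v i -> forall x, ~~ (P x && P (xo x v)).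
Definition CC (P : ('I_m -> bool) -> bool) (M s : 'I_m) : Prop :=
  exists v, msupp v M /\ (exists x, P x && P (xo x v)) /\
    forall u, msupp u s -> exists x,
      P x (+) P (xo x u) (+) P (xo x v) (+) P (xo (xo x u) v).

Lemma Inv1_ext P Q (i : 'I_m) : (forall x, P x = Q x) -> Inv1 P i -> Inv1 Q i.
Proof. move=> E [v [H1 H2]]; exists v; split => // x; by rewrite -!E. Qed.
Lemma Inv2_ext P Q (i : 'I_m) : (forall x, P x = Q x) -> Inv2 P i -> Inv2 Q i.
Proof. move=> E H v Hv x; rewrite -!E; exact: H. Qed.
Lemma CC_ext P Q M s : (forall x, P x = Q x) -> CC P M s -> CC Q M s.
Proof.
move=> E [v [H1 [[x0 H2] H3]]]; exists v; split => //; split.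
  by exists x0; rewrite -!E.
move=> u Hu; have [x Hx] := H3 u Hu; exists x; by rewrite -!E.
Qed.

Definition good (h : {set 'I_m}) (a1 a2 b1 b2 : 'I_m) : Prop :=
  (a1 != a2) /\ (b1 != b2) /\ (a1 != b1) /\ (a1 != b2) /\ (a2 != b1) /\ (a2 != b2) /\
  (a1 \notin h) /\ (a2 \notin h) /\ (b1 \notin h) /\ (b2 \notin h).
Definition DD (a1 a2 b1 b2 k : 'I_m) := [|| k == a1, k == a2, k == b1 | k == b2].
Definition PS (h : {set 'I_m}) (a1 a2 b1 b2 : 'I_m) : {set {set 'I_m}} :=
  [set h :|: [set a1; a2]; h :|: [set b1; b2]].

Ltac gs := solve [assumption | rewrite eq_sym; assumption].
Ltac dg G := case: G => [?[?[?[?[?[?[?[?[??]]]]]]]]].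

Section Fam.
Variable Lf : 'I_m -> ('I_m -> bool) -> bool.
Hypothesis HA : forall (j : 'I_m) x y, (forall k : 'I_m, (k <= j)%N -> x k = y k) -> Lf j x = Lf j y.
Hypothesis HB : forall (j : 'I_m) x, Lf j (flip x j) = ~~ Lf j x.
Hypothesis HC : forall (j : 'I_m) x v, Lf j (xo x v) = Lf j x (+) Lf j v (+) Lf j z0.

Definition lv (j : 'I_m) v := Lf j v (+) Lf j z0.
Definition TT (S : {set 'I_m}) x := [forall j in S, Lf j x].
Definition PP h a1 a2 b1 b2 x :=
  TT h x && ((Lf a1 x && Lf a2 x) (+) (Lf b1 x && Lf b2 x)).

Lemma Lxo (j : 'I_m) x v : Lf j (xo x v) = Lf j x (+) lv j v.
Proof. by rewrite HC /lv addbA. Qed.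

Lemma lv_low (i : 'I_m) v : (forall k : 'I_m, (k < i)%N -> v k = false) -> lv i v = v i.
Proof.
move=> Hv; rewrite /lv; case Hvi: (v i).
  have -> : Lf i v = Lf i (flip z0 i).
    apply: HA => k Hk; rewrite /flip /z0.
    have [->|ne] := eqVneq k i; first by rewrite Hvi.
    apply: Hv; by rewrite ltn_neqAle Hk andbT val_eqE.
  by rewrite HB; case: (Lf i z0).
have -> : Lf i v = Lf i z0.
  apply: HA => k Hk; rewrite /z0.
  have [->|ne] := eqVneq k i; first by rewrite Hvi.
  apply: Hv; by rewrite ltn_neqAle Hk andbT val_eqE.
by rewrite addbb.
Qed.

Lemma lv_below (i : 'I_m) v (j : 'I_m) : (forall k : 'I_m, (k < i)%N -> v k = false) -> (j < i)%N -> lv j v = false.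
Proof.
move=> Hv Hj; rewrite lv_low; first exact: Hv.
move=> k Hk; apply: Hv; exact: ltn_trans Hk Hj.
Qed.

Lemma solve (S : {set 'I_m}) (t y : 'I_m -> bool) :
  exists x, (forall j, j \in S -> Lf j x = t j) /\ (forall j, j \notin S -> x j = y j).
Proof.
suff H : forall n, exists x, forall j : 'I_m, (j < n)%N ->
    (j \in S -> Lf j x = t j) /\ (j \notin S -> x j = y j).
  have [x Hx] := H m; exists x; split => j Hj; [exact: (Hx j (ltn_ord j)).1 Hj | exact: (Hx j (ltn_ord j)).2 Hj].
elim=> [|n [x Hx]]; first by exists y.
case: (ltnP n m) => [Hn | Hn]; last first.
  exists x => j Hj; apply: Hx; exact: leq_trans (ltn_ord j) Hn.
pose jn := Ordinal Hn.
pose c := if jn \in S then (if Lf jn x == t jn then x jn else ~~ x jn) else y jn.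
exists (fun k => if k == jn then c else x k).
move=> j; rewrite ltnS leq_eqVlt => /orP [/eqP Ej | Hj].
  have -> : j = jn by apply/val_inj.
  rewrite eqxx; split => Hin; last by rewrite /c (negbTE Hin).
  rewrite /c Hin; case: eqP => [E|NE].
    rewrite -E; apply: HA => k _; by case: eqP => [->|].
  have -> : Lf jn (fun k => if k == jn then ~~ x jn else x k) = Lf jn (flip x jn).
    apply: HA => k _; rewrite /flip; by case: eqP => [->|].
  by rewrite HB; move: NE; case: (Lf jn x); case: (t jn).
have [H1 H2] := Hx j Hj.
have ne : j != jn by rewrite -val_eqE /= neq_ltn Hj.
split.
  move=> Hin; rewrite -H1 //; apply: HA => k Hk.
  rewrite ifN //; apply/eqP => E; move: (leq_ltn_trans Hk Hj); by rewrite E /= ltnn.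
move=> Hin; rewrite (negbTE ne); exact: H2.
Qed.

Lemma solveT (t : 'I_m -> bool) : exists x, forall j, Lf j x = t j.
Proof. have [x [H _]] := solve [set: 'I_m] t t; exists x => j; apply: H; by rewrite inE. Qed.

Lemma solve_lin (S : {set 'I_m}) (t y : 'I_m -> bool) :
  exists v, (forall j, j \in S -> lv j v = t j) /\ (forall j, j \notin S -> v j = y j).
Proof.
have [v [H1 H2]] := solve S (fun j => t j (+) Lf j z0) y.
exists v; split => // j Hj; by rewrite /lv H1 // -addbA addbb addbF.
Qed.

Lemma mk_dir (S : {set 'I_m}) (i : 'I_m) (t : 'I_m -> bool) :
  (forall j, j \in S -> (j < i)%N -> t j = false) -> (i \in S -> t i = true) ->
  exists v, msupp v i /\ (forall j, j \in S -> lv j v = t j).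
Proof.
move=> Ht Hi; have [v [H1 H2]] := solve_lin S t (fun k => k == i).
have low : forall k : 'I_m, (k < i)%N -> v k = false.
  suff H : forall n (k : 'I_m), (k < n)%N -> (k < i)%N -> v k = false.
    move=> k Hk; exact: (H i k Hk Hk).
  elim=> [//|n IH] k; rewrite ltnS leq_eqVlt => /orP [/eqP Ek | Hk] Hki; last exact: IH.
  case: (boolP (k \in S)) => Hk.
    rewrite -(@lv_low k v); first by rewrite H1 // Ht.
    move=> k' Hk'; apply: IH; first by rewrite -Ek.
    exact: ltn_trans Hk' Hki.
  rewrite H2 //; apply/negbTE; by rewrite -val_eqE neq_ltn Hki.
exists v; split => //; split => //.
case: (boolP (i \in S)) => Hi'; last by rewrite H2 // eqxx.
by rewrite -(@lv_low i v low) H1 // Hi.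
Qed.


Lemma TT_same (h : {set 'I_m}) x v : (forall j, j \in h -> lv j v = false) -> TT h (xo x v) = TT h x.
Proof. move=> H; apply: eq_forallb_in => j Hj; by rewrite Lxo H // addbF. Qed.
Lemma TT_true (h : {set 'I_m}) x : (forall j, j \in h -> Lf j x) -> TT h x.
Proof. move=> H; apply/forall_inP => j; exact: H. Qed.
Lemma TT_elim (h : {set 'I_m}) x j : TT h x -> j \in h -> Lf j x.
Proof. by move/forall_inP => H /H. Qed.
Lemma TT_false (h : {set 'I_m}) x j : j \in h -> Lf j x = false -> TT h x = false.
Proof. move=> Hj Hf; apply/negbTE/negP => /TT_elim /(_ Hj); by rewrite Hf. Qed.

Lemma PP_sa h a1 a2 b1 b2 x : PP h a1 a2 b1 b2 x = PP h a2 a1 b1 b2 x.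
Proof. by rewrite /PP (andbC (Lf a1 x)). Qed.
Lemma PP_sb h a1 a2 b1 b2 x : PP h a1 a2 b1 b2 x = PP h a1 a2 b2 b1 x.
Proof. by rewrite /PP (andbC (Lf b1 x)). Qed.
Lemma PP_ab h a1 a2 b1 b2 x : PP h a1 a2 b1 b2 x = PP h b1 b2 a1 a2 x.
Proof. by rewrite /PP addbC. Qed.

Section Core.
Variables (h : {set 'I_m}) (a1 a2 b1 b2 : 'I_m).
Hypotheses (H1 : a1 != a2) (H2 : b1 != b2) (H3 : a1 != b1) (H4 : a1 != b2)
  (H5 : a2 != b1) (H6 : a2 != b2) (Ha1 : a1 \notin h) (Ha2 : a2 \notin h)
  (Hb1 : b1 \notin h) (Hb2 : b2 \notin h).
Let e1 : (a1 == a2) = false. Proof. exact: negbTE. Qed.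
Let e2 : (b1 == b2) = false. Proof. exact: negbTE. Qed.
Let e3 : (a1 == b1) = false. Proof. exact: negbTE. Qed.
Let e4 : (a1 == b2) = false. Proof. exact: negbTE. Qed.
Let e5 : (a2 == b1) = false. Proof. exact: negbTE. Qed.
Let e6 : (a2 == b2) = false. Proof. exact: negbTE. Qed.
Let f1 : (a2 == a1) = false. Proof. by rewrite eq_sym; exact: negbTE. Qed.
Let f2 : (b2 == b1) = false. Proof. by rewrite eq_sym; exact: negbTE. Qed.
Let f3 : (b1 == a1) = false. Proof. by rewrite eq_sym; exact: negbTE. Qed.
Let f4 : (b2 == a1) = false. Proof. by rewrite eq_sym; exact: negbTE. Qed.
Let f5 : (b1 == a2) = false. Proof. by rewrite eq_sym; exact: negbTE. Qed.
Let f6 : (b2 == a2) = false. Proof. by rewrite eq_sym; exact: negbTE. Qed.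
Let g1 : (a1 \in h) = false. Proof. exact: negbTE. Qed.
Let g2 : (a2 \in h) = false. Proof. exact: negbTE. Qed.
Let g3 : (b1 \in h) = false. Proof. exact: negbTE. Qed.
Let g4 : (b2 \in h) = false. Proof. exact: negbTE. Qed.
Let nE := (e1, e2, e3, e4, e5, e6, f1, f2, f3, f4, f5, f6, g1, g2, g3, g4).

Let U := h :|: [set a1; a2; b1; b2].
Let Ua1 : a1 \in U. Proof. by rewrite !inE eqxx !orbT. Qed.
Let Ua2 : a2 \in U. Proof. by rewrite !inE eqxx !orbT. Qed.
Let Ub1 : b1 \in U. Proof. by rewrite !inE eqxx !orbT. Qed.
Let Ub2 : b2 \in U. Proof. by rewrite !inE eqxx !orbT. Qed.
Let Uh j : j \in h -> j \in U. Proof. by rewrite inE => ->. Qed.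

Definition inU (i : 'I_m) := [|| i \in h, i == a1, i == a2, i == b1 | i == b2].

Lemma inv1_out i : ~~ inU i -> Inv1 (PP h a1 a2 b1 b2) i.
Proof using All.
move=> Hi.
have Hn : i \in U -> false = true.
  by move=> H; move: Hi; rewrite /inU; rewrite !inE -!orbA in H; rewrite H.
have [v [Hv Hl]] := @mk_dir U i (fun _ => false) (fun _ _ _ => erefl) Hn.
exists v; split => // x.
rewrite /PP TT_same; last by move=> j Hj; apply: Hl; apply: Uh.
by rewrite !Lxo !Hl // !addbF.
Qed.

Lemma inv1_core i : (i \in h) || (i == a1) -> ~ Inv1 (PP h a1 a2 b1 b2) i.
Proof using All.
move=> Hi [v [[Hvi Hlow] Hinv]].
have lvi : lv i v = true by rewrite lv_low.
have [x Hx] := solveT (fun j => if j \in h then true else if j == a1 then true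
   else if j == a2 then true else if j == b1 then lv b1 v else false).
have Th : TT h x by apply: TT_true => j Hj; rewrite Hx Hj.
have xa1 : Lf a1 x = true by rewrite Hx !nE eqxx.
have xa2 : Lf a2 x = true by rewrite Hx !nE eqxx.
have xb1 : Lf b1 x = lv b1 v by rewrite Hx !nE eqxx.
have xb2 : Lf b2 x = false by rewrite Hx !nE.
have := Hinv x; rewrite /PP Th xa1 xa2 xb1 xb2 andbF addbF /=.
rewrite !Lxo xa1 xa2 xb1 addbb xb2 /=.
case/orP: Hi => [Hih | /eqP Ei].
  by rewrite (@TT_false _ _ i) // Lxo lvi (TT_elim Th Hih).
by rewrite -Ei lvi /= andbF.
Qed.

Lemma inv2_in i : i \in h -> Inv2 (PP h a1 a2 b1 b2) i.
Proof using All.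
move=> Hi v [Hvi Hlow] x; apply/negP => /andP [/andP [P1 _] /andP [P2 _]].
have := TT_elim P2 Hi; rewrite Lxo (TT_elim P1 Hi) lv_low //; by rewrite Hvi.
Qed.

Lemma ex_point : exists x, PP h a1 a2 b1 b2 x.
Proof using All.
have [x Hx] := solveT (fun j => if j \in h then true else if j == a1 then true
   else if j == a2 then true else false).
exists x; rewrite /PP.
have -> : TT h x by apply: TT_true => j Hj; rewrite Hx Hj.
by rewrite !Hx !nE !eqxx.
Qed.

Lemma inv2_out i : ~~ inU i -> ~ Inv2 (PP h a1 a2 b1 b2) i.
Proof using All.
move=> Hi H; have [v [Hv Hinv]] := inv1_out Hi.
have [x Px] := ex_point.
have := H v Hv x; by rewrite Hinv Px.
Qed.

Lemma inv2_core : ~ Inv2 (PP h a1 a2 b1 b2) a1.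
Proof using All.
move=> H.
have Hc : forall j, j \in U -> (j < a1)%N -> (j == a1) = false.
  move=> j _ Hj; apply/negbTE; by rewrite -val_eqE neq_ltn Hj.
have [v [Hv Hl]] := @mk_dir U a1 (fun j => j == a1) Hc (fun _ => eqxx _).
have [x Hx] := solveT (fun j => if j \in h then true else if j == b1 then true
   else if j == b2 then true else false).
have := H v Hv x; rewrite /PP TT_same; last first.
  move=> j Hj; rewrite Hl ?Uh //; apply/negbTE; apply/eqP => E; move: Hj; by rewrite E g1.
have -> : TT h x by apply: TT_true => j Hj; rewrite Hx Hj.
by rewrite !Lxo !Hl // !Hx !nE !eqxx.
Qed.


Lemma C_b1 : CC (PP h a1 a2 b1 b2) b2 b1.
Proof using All.
have Hc : forall j, j \in U -> (j < b2)%N -> (j == b2) = false.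
  move=> j _ Hj; apply/negbTE; by rewrite -val_eqE neq_ltn Hj.
have [v [Hv Hl]] := @mk_dir U b2 (fun j => j == b2) Hc (fun _ => eqxx _).
have lh : forall j, j \in h -> lv j v = false.
  move=> j Hj; rewrite Hl ?Uh //; apply/negbTE/eqP => E; move: Hj; by rewrite E g4.
exists v; split => //; split.
  have [x Hx] := solveT (fun j => if j \in h then true else if j == a1 then true
    else if j == a2 then true else false).
  exists x; rewrite /PP TT_same //.
  have -> : TT h x by apply: TT_true => j Hj; rewrite Hx Hj.
  by rewrite !Lxo !Hl // !Hx !nE !eqxx.
move=> u [Hu1 Hulow].
have lub1 : lv b1 u = true by rewrite lv_low.
have [x Hx] := solveT (fun j => if j \in h then true else if j == a1 then true
   else if j == a2 then true else if j == b1 then true else false).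
exists x; rewrite /PP [TT h (xo (xo x u) v)]TT_same // [TT h (xo x v)]TT_same //.
have -> : TT h x by apply: TT_true => j Hj; rewrite Hx Hj.
rewrite !Lxo !Hl // !Hx !nE !eqxx lub1 /=.
by case: (TT h (xo x u)) (lv a1 u) (lv a2 u) (lv b2 u) => [] [] [] [].
Qed.

Lemma C_a1 : (a1 < b2)%N -> (a2 < b2)%N -> (b1 < b2)%N -> ~ CC (PP h a1 a2 b1 b2) b2 a1.
Proof using All.
move=> l1 l2 l3 [v [[Hv1 Hvlow] [[x0 /andP [P0 P0v]] Hu]]].
have lh : forall j, j \in h -> lv j v = false.
  move: P0 P0v => /andP[T0 _] /andP[T0v _] j Hj.
  have := TT_elim T0v Hj; rewrite Lxo (TT_elim T0 Hj); by case: (lv j v).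
have va1 : lv a1 v = false := lv_below Hvlow l1.
have va2 : lv a2 v = false := lv_below Hvlow l2.
have vb1 : lv b1 v = false := lv_below Hvlow l3.
have vb2 : lv b2 v = true by rewrite lv_low.
have Hc : forall j, j \in U -> (j < a1)%N -> (j == a1) = false.
  move=> j _ Hj; apply/negbTE; by rewrite -val_eqE neq_ltn Hj.
have [u [Hum Hl]] := @mk_dir U a1 (fun j => j == a1) Hc (fun _ => eqxx _).
have luh : forall j, j \in h -> lv j u = false.
  move=> j Hj; rewrite Hl ?Uh //; apply/negbTE/eqP => E; move: Hj; by rewrite E g1.
have [x] := Hu u Hum.
rewrite /PP [TT h (xo (xo x u) v)]TT_same // !TT_same //.
rewrite !Lxo !Hl // va1 va2 vb1 vb2 !nE eqxx.
by case: (TT h x) (Lf a1 x) (Lf a2 x) (Lf b1 x) (Lf b2 x) => [] [] [] [] [].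
Qed.

End Core.

Lemma inv1P h a1 a2 b1 b2 i : good h a1 a2 b1 b2 ->
  Inv1 (PP h a1 a2 b1 b2) i <-> ~~ inU h a1 a2 b1 b2 i.
Proof.
move=> G; dg G; split; last exact: inv1_out.
move=> HI; apply/negP; rewrite /inU => /orP [Hh | /or4P [E|E|E|E]].
- by apply: (@inv1_core h a1 a2 b1 b2 ltac:(gs) ltac:(gs) ltac:(gs) ltac:(gs) ltac:(gs)
    ltac:(gs) ltac:(gs) ltac:(gs) ltac:(gs) ltac:(gs) i); rewrite ?Hh.
- by apply: (@inv1_core h a1 a2 b1 b2 ltac:(gs) ltac:(gs) ltac:(gs) ltac:(gs) ltac:(gs)
    ltac:(gs) ltac:(gs) ltac:(gs) ltac:(gs) ltac:(gs) i); rewrite ?E ?orbT.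
- apply: (@inv1_core h a2 a1 b1 b2 ltac:(gs) ltac:(gs) ltac:(gs) ltac:(gs) ltac:(gs)
    ltac:(gs) ltac:(gs) ltac:(gs) ltac:(gs) ltac:(gs) i); first by rewrite E orbT.
  apply: Inv1_ext HI => x; exact: PP_sa.
- apply: (@inv1_core h b1 b2 a1 a2 ltac:(gs) ltac:(gs) ltac:(gs) ltac:(gs) ltac:(gs)
    ltac:(gs) ltac:(gs) ltac:(gs) ltac:(gs) ltac:(gs) i); first by rewrite E orbT.
  apply: Inv1_ext HI => x; exact: PP_ab.
- apply: (@inv1_core h b2 b1 a1 a2 ltac:(gs) ltac:(gs) ltac:(gs) ltac:(gs) ltac:(gs)
    ltac:(gs) ltac:(gs) ltac:(gs) ltac:(gs) ltac:(gs) i); first by rewrite E orbT.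
  apply: Inv1_ext HI => x; by rewrite PP_ab PP_sa.
Qed.

Lemma inv2P h a1 a2 b1 b2 i : good h a1 a2 b1 b2 ->
  Inv2 (PP h a1 a2 b1 b2) i <-> i \in h.
Proof.
move=> G; dg G; split; last exact: inv2_in.
move=> HI; apply/negPn/negP => Hh.
case: (boolP (inU h a1 a2 b1 b2 i)) => Hi; last first.
  exact: (@inv2_out h a1 a2 b1 b2 ltac:(gs) ltac:(gs) ltac:(gs) ltac:(gs) ltac:(gs)
    ltac:(gs) ltac:(gs) ltac:(gs) ltac:(gs) ltac:(gs) i Hi HI).
move: Hi; rewrite /inU (negbTE Hh) /= => /or4P [/eqP E|/eqP E|/eqP E|/eqP E]; subst i.
- by apply: (@inv2_core h a1 a2 b1 b2 ltac:(gs) ltac:(gs) ltac:(gs) ltac:(gs) ltac:(gs)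
    ltac:(gs) ltac:(gs) ltac:(gs) ltac:(gs) ltac:(gs)).
- apply: (@inv2_core h a2 a1 b1 b2 ltac:(gs) ltac:(gs) ltac:(gs) ltac:(gs) ltac:(gs)
    ltac:(gs) ltac:(gs) ltac:(gs) ltac:(gs) ltac:(gs)).
  apply: Inv2_ext HI => x; exact: PP_sa.
- apply: (@inv2_core h b1 b2 a1 a2 ltac:(gs) ltac:(gs) ltac:(gs) ltac:(gs) ltac:(gs)
    ltac:(gs) ltac:(gs) ltac:(gs) ltac:(gs) ltac:(gs)).
  apply: Inv2_ext HI => x; exact: PP_ab.
- apply: (@inv2_core h b2 b1 a1 a2 ltac:(gs) ltac:(gs) ltac:(gs) ltac:(gs) ltac:(gs)
    ltac:(gs) ltac:(gs) ltac:(gs) ltac:(gs) ltac:(gs)).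
  apply: Inv2_ext HI => x; by rewrite PP_ab PP_sa.
Qed.

Lemma CmaxP h a1 a2 b1 b2 s : good h a1 a2 b1 b2 ->
  (a1 < b2)%N -> (a2 < b2)%N -> (b1 < b2)%N -> [|| s == a1, s == a2 | s == b1] ->
  CC (PP h a1 a2 b1 b2) b2 s -> s = b1.
Proof.
move=> G l1 l2 l3; dg G; case/or3P => /eqP -> // HC'; exfalso.
  exact: (@C_a1 h a1 a2 b1 b2 ltac:(gs) ltac:(gs) ltac:(gs) ltac:(gs) ltac:(gs)
    ltac:(gs) ltac:(gs) ltac:(gs) ltac:(gs) ltac:(gs) l1 l2 l3).
apply: (@C_a1 h a2 a1 b1 b2 ltac:(gs) ltac:(gs) ltac:(gs) ltac:(gs) ltac:(gs)
    ltac:(gs) ltac:(gs) ltac:(gs) ltac:(gs) ltac:(gs) l2 l1 l3).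
apply: CC_ext HC' => x; exact: PP_sa.
Qed.

Lemma Cb1P h a1 a2 b1 b2 : good h a1 a2 b1 b2 -> CC (PP h a1 a2 b1 b2) b2 b1.
Proof.
move=> G; dg G; exact: (@C_b1 h a1 a2 b1 b2 ltac:(gs) ltac:(gs) ltac:(gs) ltac:(gs) ltac:(gs)
    ltac:(gs) ltac:(gs) ltac:(gs) ltac:(gs) ltac:(gs)).
Qed.

End Fam.

Lemma set2C' (T : finType) (x y : T) : [set x; y] = [set y; x].
Proof. by rewrite setUC. Qed.

Lemma normalize h a1 a2 b1 b2 M : good h a1 a2 b1 b2 -> DD a1 a2 b1 b2 M ->
  exists c1 c2 d1, [/\ good h c1 c2 d1 M,
    forall Lf x, PP Lf h a1 a2 b1 b2 x = PP Lf h c1 c2 d1 M x,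
    PS h a1 a2 b1 b2 = PS h c1 c2 d1 M &
    forall k, DD a1 a2 b1 b2 k = DD c1 c2 d1 M k].
Proof.
move=> G; have G0 := G; dg G; case/or4P => /eqP ->.
- exists b1, b2, a2; split.
  + by do !split; gs.
  + by move=> Lf x; rewrite PP_ab PP_sb.
  + by rewrite /PS [[set a2; a1]]set2C' set2C'.
  + by move=> k; rewrite /DD; case: (k == a1); case: (k == a2); case: (k == b1); case: (k == b2).
- exists b1, b2, a1; split.
  + by do !split; gs.
  + by move=> Lf x; rewrite PP_ab.
  + by rewrite /PS set2C'.
  + by move=> k; rewrite /DD; case: (k == a1); case: (k == a2); case: (k == b1); case: (k == b2).
- exists a1, a2, b2; split.
  + by do !split; gs.
  + by move=> Lf x; rewrite PP_sb.
  + by rewrite /PS [[set b2; b1]]set2C'.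
  + by move=> k; rewrite /DD; case: (k == a1); case: (k == a2); case: (k == b1); case: (k == b2).
- by exists a1, a2, b1; split.
Qed.

Lemma DD_inU h a1 a2 b1 b2 k : good h a1 a2 b1 b2 ->
  DD a1 a2 b1 b2 k = inU h a1 a2 b1 b2 k && (k \notin h).
Proof.
move=> G; dg G; rewrite /DD /inU; case: (boolP (k \in h)) => Hk; rewrite ?andbF ?andbT //.
apply/negbTE/negP => /or4P [] /eqP E; subst k; move: Hk; apply/negP; gs.
Qed.

Lemma set_c h c1 c2 d1 M : good h c1 c2 d1 M ->
  [set c1; c2] = [set k | DD c1 c2 d1 M k && (k != d1) && (k != M)].
Proof.
case=> [n12 [n34 [n13 [n14 [n23 [n24 _]]]]]]; apply/setP => k; rewrite !inE /DD.
case: (eqVneq k c1) => [->|n1]; first by rewrite n13 n14.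
case: (eqVneq k c2) => [->|n2]; first by rewrite n23 n24.
by rewrite /=; case: (k == d1); case: (k == M).
Qed.

Section Asm.
Variables (Lf1 Lf2 : 'I_m -> ('I_m -> bool) -> bool).
Hypothesis HA1 : forall (j : 'I_m) x y, (forall k : 'I_m, (k <= j)%N -> x k = y k) -> Lf1 j x = Lf1 j y.
Hypothesis HB1 : forall (j : 'I_m) x, Lf1 j (flip x j) = ~~ Lf1 j x.
Hypothesis HC1 : forall (j : 'I_m) x v, Lf1 j (xo x v) = Lf1 j x (+) Lf1 j v (+) Lf1 j z0.
Hypothesis HA2 : forall (j : 'I_m) x y, (forall k : 'I_m, (k <= j)%N -> x k = y k) -> Lf2 j x = Lf2 j y.
Hypothesis HB2 : forall (j : 'I_m) x, Lf2 j (flip x j) = ~~ Lf2 j x.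
Hypothesis HC2 : forall (j : 'I_m) x v, Lf2 j (xo x v) = Lf2 j x (+) Lf2 j v (+) Lf2 j z0.

Lemma assemble h a1 a2 b1 b2 h' a1' a2' b1' b2' :
  good h a1 a2 b1 b2 -> good h' a1' a2' b1' b2' ->
  (forall x, PP Lf1 h a1 a2 b1 b2 x = PP Lf2 h' a1' a2' b1' b2' x) ->
  PS h a1 a2 b1 b2 = PS h' a1' a2' b1' b2'.
Proof.
move=> G G' E.
have E' : forall x, PP Lf2 h' a1' a2' b1' b2' x = PP Lf1 h a1 a2 b1 b2 x by move=> x; rewrite E.
have hh : h = h'.
  apply/setP => i; apply/idP/idP => Hi.
    apply/(inv2P HA2 HB2 HC2 i G').1; apply: Inv2_ext E _; exact/(inv2P HA1 HB1 HC1 i G).2.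
  apply/(inv2P HA1 HB1 HC1 i G).1; apply: Inv2_ext E' _; exact/(inv2P HA2 HB2 HC2 i G').2.
subst h'.
have hU : forall i, inU h a1 a2 b1 b2 i = inU h a1' a2' b1' b2' i.
  move=> i; apply: negb_inj; apply/idP/idP => Hi.
    apply/(inv1P HA2 HB2 HC2 i G').1; apply: Inv1_ext E _; exact/(inv1P HA1 HB1 HC1 i G).2.
  apply/(inv1P HA1 HB1 HC1 i G).1; apply: Inv1_ext E' _; exact/(inv1P HA2 HB2 HC2 i G').2.
have hD : forall k, DD a1 a2 b1 b2 k = DD a1' a2' b1' b2' k.
  by move=> k; rewrite (DD_inU k G) (DD_inU k G') hU.
have Da1 : DD a1 a2 b1 b2 a1 by rewrite /DD eqxx.
case: (@arg_maxnP _ a1 (DD a1 a2 b1 b2) val Da1) => M DM Mmax.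
have [c1 [c2 [d1 [G1 E1 S1 D1]]]] := normalize G DM.
have DM' : DD a1' a2' b1' b2' M by rewrite -hD.
have [c1' [c2' [d1' [G2 E2 S2 D2]]]] := normalize G' DM'.
have EE : forall x, PP Lf1 h c1 c2 d1 M x = PP Lf2 h c1' c2' d1' M x.
  by move=> x; rewrite -E1 -E2 E.
have ltM : forall k, DD c1 c2 d1 M k -> k != M -> (k < M)%N.
  move=> k Hk nk; rewrite ltn_neqAle val_eqE nk /=; apply: Mmax; by rewrite D1.
have G1' := G1; case: G1' => [_ [_ [n13 [n14 [n23 [n24 _]]]]]].
have l1 : (c1 < M)%N by apply: ltM => //; rewrite /DD eqxx.
have l2 : (c2 < M)%N by apply: ltM => //; rewrite /DD eqxx orbT.
have G2' := G2; case: G2' => [_ [_ [_ [_ [_ [_ _]]]]]].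
have CC1 := Cb1P HA1 HB1 HC1 G1.
have CC2 : CC (PP Lf2 h c1' c2' d1' M) M d1 by apply: CC_ext EE CC1.
have nd1 : d1 != M by case: G1 => [_ [n34 _]].
have Dd1 : DD c1' c2' d1' M d1.
  by rewrite -D2 -hD D1 /DD eqxx !orbT.
have l1' : (c1' < M)%N.
  have [n12' [n34' [n13' [n14' _]]]] := G2.
  rewrite ltn_neqAle val_eqE n14' /=; apply: Mmax; by rewrite hD D2 /DD eqxx.
have l2' : (c2' < M)%N.
  have [n12' [n34' [n13' [n14' [n23' [n24' _]]]]]] := G2.
  rewrite ltn_neqAle val_eqE n24' /=; apply: Mmax; by rewrite hD D2 /DD eqxx orbT.
have l3' : (d1' < M)%N.
  have [n12' [n34' _]] := G2.
  rewrite ltn_neqAle val_eqE n34' /=; apply: Mmax; by rewrite hD D2 /DD eqxx !orbT.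
have ed : d1 = d1'.
  apply: (CmaxP HA2 HB2 HC2 G2 l1' l2' l3') CC2.
  by move: Dd1; rewrite /DD (negbTE nd1) orbF.
subst d1'.
have Sc : [set c1; c2] = [set c1'; c2'].
  rewrite (set_c G1) (set_c G2); apply/setP => k; by rewrite !inE -D1 -D2 hD.
by rewrite S1 S2 /PS Sc.
Qed.

End Asm.
End Abs.

Lemma set2C (T : finType) (x y : T) : [set x; y] = [set y; x].
Proof. by rewrite setUC. Qed.

Section Ev.
Variable m : nat.

Definition evalp (p : Rm m) (x : 'I_m -> bool) : bool :=
  \big[addb/false]_(u : monom m) ((u \in p) && [forall k in u, x k]).

Lemma big_andr (I : finType) (F : I -> bool) c :
  (\big[addb/false]_(i : I) F i) && c = \big[addb/false]_(i : I) (F i && c).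
Proof. elim/big_rec2: _ => [//|i y1 y2 _ <-]; by rewrite andb_addl. Qed.
Lemma big_andl (I : finType) (F : I -> bool) c :
  c && (\big[addb/false]_(i : I) F i) = \big[addb/false]_(i : I) (c && F i).
Proof. by rewrite andbC big_andr; apply: eq_bigr => i _; rewrite andbC. Qed.

Lemma odd_card (T : finType) (P : pred T) : odd #|P| = \big[addb/false]_(z : T) P z.
Proof.
have -> : \big[addb/false]_(z : T) P z = \big[addb/false]_(z in P) true.
  by rewrite [RHS]big_mkcond /=; apply: eq_bigr => z _; rewrite -topredE /=; case: (P z).
rewrite big_const; elim: #|P| => //= n ->; by case: (odd n).
Qed.

Lemma odd_cards (T : finType) (S : {set T}) : odd #|S| = \big[addb/false]_(z : T) (z \in S).
Proof.
have -> : \big[addb/false]_(z : T) (z \in S) = \big[addb/false]_(z in S) true.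
  by rewrite [RHS]big_mkcond /=; apply: eq_bigr => z _; case: (z \in S).
rewrite big_const; elim: #|S| => //= n ->; by case: (odd n).
Qed.

Lemma big_pick (T : finType) (w : T) c (G : T -> bool) :
  \big[addb/false]_(u : T) ((c && (w == u)) && G u) = c && G w.
Proof.
rewrite (bigD1 w) //= eqxx andbT big1 ?addbF // => u Hu.
by rewrite (eq_sym w) (negbTE Hu) andbF.
Qed.

Lemma forall_setU (T : finType) (A B : {set T}) (x : T -> bool) :
  [forall k in A :|: B, x k] = [forall k in A, x k] && [forall k in B, x k].
Proof.
apply/idP/idP => [/forall_inP H | /andP [/forall_inP H1 /forall_inP H2]].
  by apply/andP; split; apply/forall_inP => k Hk; apply: H; rewrite inE Hk ?orbT.
apply/forall_inP => k; rewrite inE => /orP [] Hk; [exact: H1 | exact: H2].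
Qed.

Lemma eval_padd p q x : evalp (padd p q) x = evalp p x (+) evalp q x.
Proof.
rewrite /evalp -big_split /=; apply: eq_bigr => u _; rewrite /padd !inE.
by case: (u \in p); case: (u \in q); case: [forall k in u, x k].
Qed.

Lemma eval_pzero x : evalp (pzero m) x = false.
Proof. by rewrite /evalp big1 // => u _; rewrite inE. Qed.

Lemma eval_pone x : evalp (pone m) x = true.
Proof.
rewrite /evalp (bigD1 set0) //= big1 ?addbF.
  rewrite inE eqxx /=; apply/forall_inP => k; by rewrite inE.
move=> u Hu; by rewrite inE (negbTE Hu).
Qed.

Lemma eval_pvar i x : evalp (pvar i) x = x i.
Proof.
rewrite /evalp (bigD1 [set i]) //= big1 ?addbF.
  rewrite inE eqxx /=; apply/idP/idP => [/forall_inP H | Hi].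
    by apply: H; rewrite inE.
  by apply/forall_inP => k /set1P ->.
move=> u Hu; by rewrite inE (negbTE Hu).
Qed.

Lemma eval_pmul p q x : evalp (pmul p q) x = evalp p x && evalp q x.
Proof.
rewrite /evalp.
rewrite [LHS](eq_bigr (fun u => \big[addb/false]_(ab : monom m * monom m)
   (((ab \in setX p q) && (ab.1 :|: ab.2 == u)) && [forall k in u, x k]))); last first.
  move=> u _; rewrite /pmul inE odd_cards big_andr; apply: eq_bigr => ab _; by rewrite inE.
rewrite exchange_big /= big_andr.
under [RHS]eq_bigr => a _ do rewrite big_andl.
rewrite [RHS]pair_big /=.
apply: eq_bigr => [[a b]] _ /=.
rewrite big_pick forall_setU in_setX.
by case: (a \in p); case: (b \in q); case: [forall k in a, x k].
Qed.

Definition lin (B : 'M[bool]_m) (e : {ffun 'I_m -> bool}) (i : 'I_m) (x : 'I_m -> bool) :=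
  x i (+) ((\big[addb/false]_(j : 'I_m | (j < i)%N) (B i j && x j)) (+) e i).

Lemma eval_lin B e i x : evalp (linform B e i) x = lin B e i x.
Proof.
rewrite /linform !eval_padd eval_pvar.
rewrite (big_morph (evalp^~ x) (fun a b => eval_padd a b x) (eval_pzero x)).
rewrite /lin; congr (_ (+) (_ (+) _)).
  apply: eq_bigr => j _; case: (B i j); by rewrite ?eval_pvar ?eval_pzero.
by case: (e i); rewrite ?eval_pone ?eval_pzero.
Qed.

Lemma eval_act B e u x : evalp (act B e u) x = [forall i in u, lin B e i x].
Proof.
rewrite /act (big_morph (evalp^~ x) (fun a b => eval_pmul a b x) (eval_pone x)).
rewrite big_andE; apply: eq_forallb => i; by rewrite eval_lin.
Qed.

End Ev.

Section Fin.
Variable m : nat.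

Lemma lin_HA B e (j : 'I_m) (x y : 'I_m -> bool) :
  (forall k : 'I_m, (k <= j)%N -> x k = y k) -> lin B e j x = lin B e j y.
Proof.
move=> H; rewrite /lin H //; congr (_ (+) (_ (+) _)).
apply: eq_bigr => k Hk; by rewrite H // ltnW.
Qed.

Lemma lin_HB B e (j : 'I_m) (x : 'I_m -> bool) : lin B e j (flip x j) = ~~ lin B e j x.
Proof.
rewrite /lin /flip eqxx -addNb; congr (_ (+) (_ (+) _)).
apply: eq_bigr => k Hk; rewrite ifN //; apply/eqP => E; move: Hk; by rewrite E ltnn.
Qed.

Lemma lin_HC B e (j : 'I_m) (x v : 'I_m -> bool) :
  lin B e j (xo x v) = lin B e j x (+) lin B e j v (+) lin B e j (@z0 m).
Proof.
rewrite /lin /xo /z0.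
have -> : \big[addb/false]_(k : 'I_m | (k < j)%N) (B j k && (x k (+) v k)) =
  \big[addb/false]_(k : 'I_m | (k < j)%N) (B j k && x k) (+)
  \big[addb/false]_(k : 'I_m | (k < j)%N) (B j k && v k).
  by rewrite -big_split; apply: eq_bigr => k _; rewrite andb_addr.
have -> : \big[addb/false]_(k : 'I_m | (k < j)%N) (B j k && false) = false.
  by rewrite big1 // => k _; rewrite andbF.
by case: (x j); case: (v j); case: (e j); case: (\big[addb/false]_(k : 'I_m | (k < j)%N) (B j k && x k));
  case: (\big[addb/false]_(k : 'I_m | (k < j)%N) (B j k && v k)).
Qed.

Definition Lfam (B1 B2 B3 : 'M[bool]_m) (e1 e2 e3 : {ffun 'I_m -> bool}) (h f : {set 'I_m})
  (j : 'I_m) : ('I_m -> bool) -> bool :=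
  if j \in h then lin B1 e1 j else if j \in f then lin B2 e2 j else lin B3 e3 j.

Lemma orbit_PP (f g : {set 'I_m}) p a1 a2 b1 b2 :
  f :\: (f :&: g) = [set a1; a2] -> g :\: (f :&: g) = [set b1; b2] ->
  orbit_set f g p -> exists Lf : 'I_m -> ('I_m -> bool) -> bool,
  [/\ forall (j : 'I_m) x y, (forall k : 'I_m, (k <= j)%N -> x k = y k) -> Lf j x = Lf j y,
      forall (j : 'I_m) x, Lf j (flip x j) = ~~ Lf j x,
      forall (j : 'I_m) x v, Lf j (xo x v) = Lf j x (+) Lf j v (+) Lf j (@z0 m) &
      forall x, evalp p x = PP Lf (f :&: g) a1 a2 b1 b2 x].
Proof.
move=> Ha Hb [B1 [e1 [B2 [e2 [B3 [e3 [_ _ _ ->]]]]]]].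
exists (Lfam B1 B2 B3 e1 e2 e3 (f :&: g) f); split.
- move=> j x y H; rewrite /Lfam; case: (j \in f :&: g); last case: (j \in f); exact: lin_HA.
- move=> j x; rewrite /Lfam; case: (j \in f :&: g); last case: (j \in f); exact: lin_HB.
- move=> j x v; rewrite /Lfam; case: (j \in f :&: g); last case: (j \in f); exact: lin_HC.
move=> x; rewrite eval_pmul eval_padd !eval_act Ha Hb /PP /TT.
have Ma1 : a1 \in f :\: (f :&: g) by rewrite Ha !inE eqxx.
have Ma2 : a2 \in f :\: (f :&: g) by rewrite Ha !inE eqxx orbT.
have Mb1 : b1 \in g :\: (f :&: g) by rewrite Hb !inE eqxx.
have Mb2 : b2 \in g :\: (f :&: g) by rewrite Hb !inE eqxx orbT.
have fa : forall a, a \in f :\: (f :&: g) -> Lfam B1 B2 B3 e1 e2 e3 (f :&: g) f a x = lin B2 e2 a x.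
  move=> a; rewrite inE => /andP [Hn Hf]; by rewrite /Lfam (negbTE Hn) Hf.
have fb : forall b, b \in g :\: (f :&: g) -> Lfam B1 B2 B3 e1 e2 e3 (f :&: g) f b x = lin B3 e3 b x.
  move=> b; rewrite !inE => /andP [Hn Hg]; rewrite /Lfam !inE (negbTE Hn).
  by move: Hn; rewrite Hg andbT => /negbTE ->.
rewrite (fa _ Ma1) (fa _ Ma2) (fb _ Mb1) (fb _ Mb2).
have F2 : forall (c d : 'I_m) (F : 'I_m -> bool), [forall i in [set c; d], F i] = F c && F d.
  move=> c d F; apply/idP/idP => [/forall_inP H | /andP [H1 H2]].
    by rewrite !H // !inE eqxx ?orbT.
  by apply/forall_inP => i /set2P [] ->.
rewrite !F2; congr (_ && _).
apply: eq_forallb_in => j Hj; by rewrite /Lfam Hj.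
Qed.

End Fin.

Theorem proposition2 (m : nat) (I : {set monom m}) (r : nat)
    (f g fs gs : monom m) :
  (1 <= m)%N ->
  decreasing I ->
  r = \max_(u in I) #|u| ->
  f \in I -> g \in I -> fs \in I -> gs \in I ->
  deg f = r -> deg g = r -> deg fs = r -> deg gs = r ->
  [set f; g] != [set fs; gs] ->
  (deg (f :&: g) + 2 = r)%N -> (deg (fs :&: gs) + 2 = r)%N ->
  forall p : Rm m, ~ (orbit_set f g p /\ orbit_set fs gs p).
Proof.
move=> _ _ _ _ _ _ _ df dg dfs dgs neq dh dhs p [O1 O2].
have card2 : forall (A B : {set 'I_m}), deg A = r -> (deg (A :&: B) + 2 = r)%N ->
    exists a1 a2, a1 != a2 /\ A :\: (A :&: B) = [set a1; a2].
  move=> A B dA dAB; apply/cards2P.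
  rewrite cardsD setIA setIid; move: dA dAB; rewrite /deg => -> <-; by rewrite addKn.
have card2' : forall (A B : {set 'I_m}), deg B = r -> (deg (A :&: B) + 2 = r)%N ->
    exists a1 a2, a1 != a2 /\ B :\: (A :&: B) = [set a1; a2].
  move=> A B dB dAB; apply/cards2P.
  rewrite cardsD setICA setIid; move: dB dAB; rewrite /deg => -> <-; by rewrite addKn.
have [a1 [a2 [na Ha]]] := card2 f g df dh.
have [b1 [b2 [nb Hb]]] := card2' f g dg dh.
have [a1' [a2' [na' Ha']]] := card2 fs gs dfs dhs.
have [b1' [b2' [nb' Hb']]] := card2' fs gs dgs dhs.
have [L1 [HA1 HB1 HC1 E1]] := orbit_PP Ha Hb O1.
have [L2 [HA2 HB2 HC2 E2]] := orbit_PP Ha' Hb' O2.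
have goodP : forall (F G : {set 'I_m}) c1 c2 d1 d2, c1 != c2 -> d1 != d2 ->
    F :\: (F :&: G) = [set c1; c2] -> G :\: (F :&: G) = [set d1; d2] ->
    good (F :&: G) c1 c2 d1 d2.
  move=> F G c1 c2 d1 d2 nc nd HF HG.
  have Mc : forall c, c \in [set c1; c2] -> (c \notin F :&: G) && (c \in F).
    by move=> c; rewrite -HF inE.
  have Md : forall d, d \in [set d1; d2] -> (d \notin F :&: G) && (d \in G).
    by move=> d; rewrite -HG inE.
  have Hc1 := Mc c1 ltac:(by rewrite !inE eqxx). have Hc2 := Mc c2 ltac:(by rewrite !inE eqxx orbT).
  have Hd1 := Md d1 ltac:(by rewrite !inE eqxx). have Hd2 := Md d2 ltac:(by rewrite !inE eqxx orbT).
  have ne : forall c d, (c \notin F :&: G) && (c \in F) -> (d \notin F :&: G) && (d \in G) -> c != d.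
    move=> c d /andP [Hc Fc] /andP [Hd Gd]; apply/eqP => E; subst d.
    by move: Hc; rewrite inE Fc Gd.
  move: (Hc1) (Hc2) (Hd1) (Hd2) => /andP [? _] /andP [? _] /andP [? _] /andP [? _].
  by do !split => //; apply: ne.
have G1 := goodP f g a1 a2 b1 b2 na nb Ha Hb.
have G2 := goodP fs gs a1' a2' b1' b2' na' nb' Ha' Hb'.
have EE : forall x, PP L1 (f :&: g) a1 a2 b1 b2 x = PP L2 (fs :&: gs) a1' a2' b1' b2' x.
  by move=> x; rewrite -E1 -E2.
have PSE := assemble HA1 HB1 HC1 HA2 HB2 HC2 G1 G2 EE.
have recon : forall (F G : {set 'I_m}) c1 c2 d1 d2,
    F :\: (F :&: G) = [set c1; c2] -> G :\: (F :&: G) = [set d1; d2] ->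
    PS (F :&: G) c1 c2 d1 d2 = [set F; G].
  move=> F G c1 c2 d1 d2 HF HG; rewrite /PS -HF -HG.
  congr [set _; _]; apply/setP => k; rewrite !inE;
    by case: (k \in F); case: (k \in G).
move: neq; by rewrite -(recon _ _ _ _ _ _ Ha Hb) -(recon _ _ _ _ _ _ Ha' Hb') PSE eqxx.
Qed.
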